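(* Let $A=-3(9s^8+48s^7t+64s^6t^2+48s^4t^4+128s^3t^5+16t^8)$ and $B=-2(3s^4+8s^3t+8t^4)(9s^8+48s^7t+64s^6t^2+48s^4t^4+128s^3t^5-8t^8)$. The elliptic surface $X\to\mathbb{P}^1$ defined by $y^2=x^3+Ax+B$ is a K3 surface whose singular fibres are exactly six semi-stable fibres, of Kodaira types $I_1,I_1,I_1,I_2,I_3,I_{16}$.
   Context: For homogeneous polynomials $A,B\in\mathbb{Q}[s,t]$ of degrees $8$ and $12$, the elliptic surface defined by $y^2=x^3+Ax+B$ is the minimal smooth relatively minimal elliptic surface over $\mathbb{P}^1$ (coordinates $(s:t)$) with zero section, obtained as the minimal resolution of this Weierstrass model; its singular fibres lie over the zeros of the discriminant $\Delta=-16(4A^3+27B^2)$. $I_n$ denotes Kodaira's fibre type (a nodal rational curve for $n=1$, a cycle of $n$ smooth rational curves for $n\ge2$); such fibres are called semi-stable. The surface is K3 iff its Euler number (the sum of Euler numbers of the singular fibres, $n$ for $I_n$) equals $24$. *)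

(* Defs.v *)
From mathcomp Require Import all_boot all_order all_algebra all_field.
Set Implicit Arguments. Unset Strict Implicit. Unset Printing Implicit Defensive.
Import Order.TTheory GRing.Theory Num.Theory.
Local Open Scope ring_scope.

(* Points of P^1 over the algebraic closure (algC) in coordinates (s:t):
   [Some a] is the point (a:1), [None] is the point at infinity (1:0). *)
Definition P1pt := option algC.

(* A binary form F(s,t) of degree d is represented by its dehomogenisation
   f(s) = F(s,1).  [ordF d f p] is the order of vanishing of F at p:
   at (a:1) it is the multiplicity of a as a root of f; at (1:0) it is
   d - deg f (the power of t dividing F). *)
Definition ordF (d : nat) (f : {poly algC}) (p : P1pt) : nat :=
  match p with
  | Some a => mup a f
  | None => (d - (size f).-1)%N
  end.

Definition discr (A B : {poly algC}) : {poly algC} :=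
  - 16 * (4 * A ^+ 3 + 27 * B ^+ 2).

Inductive kodaira :=
  | KI of nat     (* I_n, n >= 0 (I_0 = smooth fibre) *)
  | KIs of nat
  | KII | KIII | KIV | KIVs | KIIIs | KIIs
  | KNonMinimal.

(* Kodaira type of the fibre over p of the (minimal resolution of the)
   Weierstrass model y^2 = x^3 + A x + B with deg A = 8, deg B = 12
   forms, via the standard (Tate/Neron) valuation table in char. 0. *)
Definition fibre_type (A B : {poly algC}) (p : P1pt) : kodaira :=
  let a := ordF 8 A p in
  let b := ordF 12 B p in
  let dl := ordF 24 (discr A B) p in
  if (4 <= a)%N && (6 <= b)%N then KNonMinimal
  else if dl == 0%N then KI 0
  else if (a == 0%N) || (b == 0%N) then KI dl
  else if b == 1%N then KII
  else if a == 1%N then KIII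
  else if b == 2%N then KIV
  else if (a == 2%N) || (b == 3%N) then KIs (dl - 6)
  else if b == 4%N then KIVs
  else if a == 3%N then KIIIs
  else KIIs.

Definition euler_fibre (k : kodaira) : nat :=
  match k with
  | KI n => n
  | KIs n => n + 6
  | KII => 2 | KIII => 3 | KIV => 4
  | KIVs => 8 | KIIIs => 9 | KIIs => 10
  | KNonMinimal => 0
  end%N.

Definition singular_fibre (A B : {poly algC}) (p : P1pt) : Prop :=
  fibre_type A B p <> KI 0.

(* K3 criterion: the Euler numbers of the singular fibres sum to 24. *)
Definition is_K3 (A B : {poly algC}) : Prop :=
  exists ps : seq P1pt, uniq ps /\
    (forall p, singular_fibre A B p -> p \in ps) /\
    (\sum_(p <- ps) euler_fibre (fibre_type A B p) = 24)%N.

(* Main.v *)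
Set Warnings "-notation-overridden,-ambiguous-paths".
Require Import Defs.
From mathcomp Require Import all_boot all_order all_algebra all_field.
From mathcomp Require Import ring.
Import GRing.Theory Num.Theory.
Local Open Scope ring_scope.

Definition cc : {poly algC} := 9 * 'X^3 + 12 * 'X^2 - 20 * 'X + 32.
Definition AA : {poly algC} :=
    -3 * (9 * 'X^8 + 48 * 'X^7 + 64 * 'X^6 + 48 * 'X^4 + 128 * 'X^3 + 16).
Definition BB : {poly algC} :=
    -2 * (3 * 'X^4 + 8 * 'X^3 + 8)
       * (9 * 'X^8 + 48 * 'X^7 + 64 * 'X^6 + 48 * 'X^4 + 128 * 'X^3 - 8).

Lemma AA_eq : AA = -48 - 3 * 'X^3 * ('X + 2)^+2 * cc.
Proof. rewrite /AA /cc; ring. Qed.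
Lemma DD_eq : discr AA BB = 12^+6 * ('X^3 * ('X + 2)^+2 * cc).
Proof. rewrite /discr /AA /BB /cc; ring. Qed.
Lemma cc_deriv : cc^`() = 27 * 'X^2 + 24 * 'X - 20.
Proof. rewrite /cc !derivE. ring. Qed.

Lemma bez : (13662 + 4617 * 'X) * cc + (864 - 5238 * 'X - 1539 * 'X^2) * (27 * 'X^2 + 24 * 'X - 20) = 648^+2 :> {poly algC}.
Proof. rewrite /cc; ring. Qed.


Lemma hornerNat (n : nat) (x : algC) : (n%:R : {poly algC}).[x] = n%:R.
Proof. by rewrite -polyC_natr hornerC. Qed.

Lemma size_cc : size cc = 4.
Proof.
have -> : cc = ((9%:P * 'X + 12%:P) * 'X + (-20)%:P) * 'X + 32%:P.
  rewrite /cc !polyC_natr polyCN polyC_natr; ring.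
rewrite !size_MXaddC size_polyC.
have h9 : (9 : algC) != 0 by rewrite pnatr_eq0.
by rewrite polyC_eq0 oppr_eq0 !pnatr_eq0 /= !andbF.
Qed.

Lemma cc_at0 : cc.[0] = 32.
Proof. rewrite /cc !(hornerNat, hornerD, hornerN, hornerM, hornerX, horner_exp); ring. Qed.
Lemma cc_atm2 : cc.[-2] = 48.
Proof. rewrite /cc !(hornerNat, hornerD, hornerN, hornerM, hornerX, horner_exp); ring. Qed.

Lemma nosq (a : algC) h : root ((('X - a%:P) * ('X - a%:P) * h)^`()) a.
Proof. by rewrite /root !derivE !hornerE subrr !(mul0r, mulr0, add0r, addr0). Qed.

Lemma sep (a : algC) : root cc a -> ~~ root cc^`() a.
Proof.
move=> ra; apply/negP => rda.
have := congr1 (fun p => p.[a]) bez.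
move: ra rda; rewrite /root cc_deriv => /eqP ra /eqP rda.
rewrite /cc !(hornerNat, hornerD, hornerN, hornerM, hornerX, horner_exp) in ra.
rewrite !(hornerNat, hornerD, hornerN, hornerM, hornerX, horner_exp) in rda.
rewrite !(hornerNat, hornerD, hornerN, hornerM, hornerX, horner_exp) ra rda !(mulr0, addr0) => /eqP.
by rewrite eq_sym mulf_eq0 pnatr_eq0.
Qed.

Lemma main_core : exists (lc : algC) (r1 r2 r3 : algC),
  [/\ lc != 0, cc = lc *: \prod_(z <- [:: r1; r2; r3]) ('X - z%:P) &
      uniq [:: r1; r2; r3; -2; 0] ].
Proof.
have [rs crs] := closed_field_poly_normal cc.
set lc := lead_coef cc in crs.
have lc0 : lc != 0 by rewrite lead_coef_eq0 -size_poly_gt0 size_cc.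
have : size rs = 3.
  by have := size_cc; rewrite crs size_scale // size_prod_XsubC => -[].
case: rs crs => [|r1 [|r2 [|r3 [|]]]] //= crs _.
have rt : forall z, z \in [:: r1; r2; r3] -> root cc z.
  by move=> z zin; rewrite crs rootZ // root_prod_XsubC.
have n0 : forall z, z \in [:: r1; r2; r3] -> z != 0.
  move=> z /rt; apply: contraTneq => ->; by rewrite /root cc_at0 pnatr_eq0.
have n2 : forall z, z \in [:: r1; r2; r3] -> z != -2.
  move=> z /rt; apply: contraTneq => ->; by rewrite /root cc_atm2 pnatr_eq0.
have sq : forall a h, cc = ('X - a%:P) * ('X - a%:P) * h -> False.
  move=> a h e; have := sep a; rewrite e nosq /root.
  by rewrite !(hornerM, hornerD, hornerN, hornerX, hornerC) subrr !mul0r eqxx => /(_ isT).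
exists lc, r1, r2, r3; split => //.
rewrite /= !inE !negb_or.
have n20 : (-2 : algC) != 0 by rewrite oppr_eq0 pnatr_eq0.
rewrite n20 !n0 ?n2 ?inE ?eqxx ?orbT //= !andbT.
move: crs; rewrite !big_cons big_nil -mul_polyC => crs.
rewrite -!andbA; apply/and3P; split; apply/negP => /eqP e; rewrite {}e in crs.
- apply: (sq r2 (lc%:P * ('X - r3%:P))); rewrite crs; ring.
- apply: (sq r3 (lc%:P * ('X - r2%:P))); rewrite crs; ring.
- apply: (sq r3 (lc%:P * ('X - r1%:P))); rewrite crs; ring.
Qed.

Lemma neqF {a b : algC} : a != b -> ((a == b) = false) * ((b == a) = false).
Proof. by move=> h; split; [exact: negbTE | rewrite eq_sym; exact: negbTE]. Qed.

Lemma main_AB : 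
  [/\ discr AA BB != 0,
      (forall p, fibre_type AA BB p <> KNonMinimal),
      is_K3 AA BB &
      exists p1 p2 p3 p4 p5 p6 : P1pt,
        [/\ uniq [:: p1; p2; p3; p4; p5; p6],
            [/\ fibre_type AA BB p1 = KI 1, fibre_type AA BB p2 = KI 1,
                fibre_type AA BB p3 = KI 1, fibre_type AA BB p4 = KI 2 &
                fibre_type AA BB p5 = KI 3 /\ fibre_type AA BB p6 = KI 16] &
            forall p, singular_fibre AA BB p -> p \in [:: p1; p2; p3; p4; p5; p6]]].
Proof.
have [lc [r1 [r2 [r3 [lc0 crs un]]]]] := main_core.
set s := [:: r1; r2; r3; -2; -2; 0; 0; 0].
set P := \prod_(z <- s) ('X - z%:P).
have eP : P = 'X^3 * ('X + 2)^+2 * \prod_(z <- [:: r1; r2; r3]) ('X - z%:P).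
  rewrite /P /s !big_cons big_nil polyCN polyC_natr polyC0 subr0 opprK; ring.
have hD : discr AA BB = (12^+6 * lc)%:P * P.
  rewrite DD_eq crs eP -mul_polyC polyCM polyC_exp polyC_natr; ring.
have hA : AA = (-48)%:P - (3 * lc)%:P * P.
  rewrite AA_eq crs eP -mul_polyC polyCM polyCN !polyC_natr; ring.
have Pm : P \is monic by apply: monic_prod_XsubC.
have P0 : P != 0 by apply: monic_neq0.
have sP : size P = 9 by rewrite size_prod_XsubC.
have K0 : 12 ^+ 6 * lc != 0 by rewrite mulf_neq0 // expf_neq0 // pnatr_eq0.
have l3 : 3 * lc != 0 by rewrite mulf_neq0 // pnatr_eq0.
have D0 : discr AA BB != 0 by rewrite hD mulf_neq0 // polyC_eq0.
have sD : size (discr AA BB) = 9 by rewrite hD mul_polyC size_scale.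
have sA : size AA = 9.
  rewrite hA addrC size_polyDl size_polyN mul_polyC size_scale // size_polyC.
  by rewrite sP; case: (_ != 0).
have mD : forall x, mup x (discr AA BB) = count_mem x s.
  by move=> x; rewrite hD mupMr ?mu_prod_XsubC // rootC.
have hAx : forall x, AA.[x] = -48 - 3 * lc * P.[x].
  by move=> x; rewrite hA !(hornerD, hornerN, hornerM, hornerC) ?mulrA.
have hDx : forall x, (discr AA BB).[x] = 12^+6 * lc * P.[x].
  by move=> x; rewrite hD !(hornerM, hornerC).
have hDx2 : forall x, (discr AA BB).[x] = -16 * (4 * AA.[x]^+3 + 27 * BB.[x]^+2).
  by move=> x; rewrite /discr !(hornerNat, hornerD, hornerN, hornerM, horner_exp).
have n48 : (-48 : algC) != 0 by rewrite oppr_eq0 pnatr_eq0.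
have ftS : forall x, fibre_type AA BB (Some x) = KI (count_mem x s).
  move=> x; rewrite /fibre_type; set k := count_mem x s; rewrite /= mD -/k.
  have [xs|xns] := boolP (x \in s).
    have -> : mup x AA = 0%N.
      apply: mupNroot; rewrite /root hAx.
      by move: xs; rewrite -root_prod_XsubC -/P /root => /eqP ->; rewrite mulr0 subr0.
    by rewrite /=; case: eqP => // ->.
  have k0 : k = 0%N by exact: (count_memPn xns).
  rewrite k0 /=.
  suff h : (mup x AA == 0%N) || (mup x BB == 0%N). by case/orP: h => /eqP ->; rewrite ?andbF.
  have Px : P.[x] != 0 by move: xns; rewrite -root_prod_XsubC -/P.
  have [Ax|Ax] := eqVneq AA.[x] 0; last by rewrite mupNroot ?eqxx // /root Ax.
  rewrite orbC mupNroot ?eqxx // /root; apply/negP => /eqP Bx.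
  have := hDx x; rewrite hDx2 Ax Bx !expr0n /= !(mulr0, addr0, add0r) => /esym /eqP.
  by rewrite !mulf_eq0 (negbTE Px) (negbTE lc0) pnatr_eq0.
have ftN : fibre_type AA BB None = KI 16 by rewrite /fibre_type /= sA sD.
have unO : uniq [:: Some r1; Some r2; Some r3; Some (-2); Some 0; None].
  by move: un; rewrite /= !inE /= !orbF !andbT.
move: un; rewrite /= !inE !negb_or /= !andbT.
move=> /and4P [/and4P [h12 h13 h1m h10] /and3P [h23 h2m h20] /andP [h3m h30] hm0].
have C1 : count_mem r1 s = 1%N.
  by rewrite /s /= eqxx !(neqF h12, neqF h13, neqF h1m, neqF h10, neqF h23, neqF h2m, neqF h20, neqF h3m, neqF h30, neqF hm0).
have C2 : count_mem r2 s = 1%N.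
  by rewrite /s /= eqxx !(neqF h12, neqF h13, neqF h1m, neqF h10, neqF h23, neqF h2m, neqF h20, neqF h3m, neqF h30, neqF hm0).
have C3 : count_mem r3 s = 1%N.
  by rewrite /s /= eqxx !(neqF h12, neqF h13, neqF h1m, neqF h10, neqF h23, neqF h2m, neqF h20, neqF h3m, neqF h30, neqF hm0).
have C4 : count_mem (-2) s = 2%N.
  by rewrite /s /= eqxx !(neqF h12, neqF h13, neqF h1m, neqF h10, neqF h23, neqF h2m, neqF h20, neqF h3m, neqF h30, neqF hm0).
have C5 : count_mem 0 s = 3%N.
  by rewrite /s /= eqxx !(neqF h12, neqF h13, neqF h1m, neqF h10, neqF h23, neqF h2m, neqF h20, neqF h3m, neqF h30, neqF hm0).
have sing : forall p, singular_fibre AA BB p ->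
    p \in [:: Some r1; Some r2; Some r3; Some (-2); Some 0; None].
  case=> [x|] h; last by rewrite !inE.
  have : x \in s by apply/negPn/negP => /count_memPn c; apply: h; rewrite ftS c.
  rewrite !inE /=; do !case/orP=> [/eqP->|]; try move/eqP->; rewrite ?eqxx ?orbT //.
split => //.
- by case=> [x|]; rewrite ?ftS ?ftN.
- exists [:: Some r1; Some r2; Some r3; Some (-2); Some 0; None]; split => //.
  by rewrite !big_cons big_nil !ftS ftN C1 C2 C3 C4 C5.
- exists (Some r1), (Some r2), (Some r3), (Some (-2)), (Some 0), None.
  by split => //; split; rewrite ?ftS ?ftN ?C1 ?C2 ?C3 ?C4 ?C5.
Qed.

Theorem mainTheorem4 :
  (* A(s,1) and B(s,1) *)
  let A : {poly algC} :=
    -3 * (9 * 'X^8 + 48 * 'X^7 + 64 * 'X^6 + 48 * 'X^4 + 128 * 'X^3 + 16) in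
  let B : {poly algC} :=
    -2 * (3 * 'X^4 + 8 * 'X^3 + 8)
       * (9 * 'X^8 + 48 * 'X^7 + 64 * 'X^6 + 48 * 'X^4 + 128 * 'X^3 - 8) in
  [/\ discr A B != 0,
      (forall p, fibre_type A B p <> KNonMinimal),
      is_K3 A B &
      exists p1 p2 p3 p4 p5 p6 : P1pt,
        [/\ uniq [:: p1; p2; p3; p4; p5; p6],
            [/\ fibre_type A B p1 = KI 1, fibre_type A B p2 = KI 1,
                fibre_type A B p3 = KI 1, fibre_type A B p4 = KI 2 &
                fibre_type A B p5 = KI 3 /\ fibre_type A B p6 = KI 16] &
            forall p, singular_fibre A B p -> p \in [:: p1; p2; p3; p4; p5; p6]]].
Proof.
exact: main_AB.
Qed.
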